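(* Let $n\ge1$. (1) For a permutation $\pi$ of $\{0,\ldots,2^n-1\}$, the following are equivalent: $\pi$ is admissible; (a) for all $k<2^n$, $\mathrm{Weight}(\pi(k))=\mathrm{IStep}(n,k)$; (b) for all $i<n$, $\pi[\mathrm{I}A_{n,i}]=\mathrm{I}B_{n,i}$; (c) $\mathrm{I}S^*_n=\mathrm{I}S_n\circ\pi$. (2) The number of admissible permutations of $\{0,\ldots,2^n-1\}$ is $\prod_{i=0}^n\left(\binom{n}{i}!\right)$.
   Context: For $x\in(0,1)$ write $x=\sum_{i\ge1}\varepsilon_i(x)2^{-i}$ with $\varepsilon_i(x)\in\{0,1\}$ and infinitely many $\varepsilon_i(x)=0$; let $S_n(x)=\sum_{i=1}^n(-1)^{1+\varepsilon_i(x)}$, and let $S^*_n$ be the quantile function of $S_n$ with respect to Lebesgue measure on $(0,1)$: $S^*_n(x)=\inf\{t: F_{S_n}(t)\ge x\}$. Dyadic intervals: $D_{n,0}=(0,2^{-n})$, $D_{n,k}=[k2^{-n},(k+1)2^{-n})$ for $0<k<2^n$; $S_n$ and $S^*_n$ are constant on each $D_{n,k}$, and $\mathrm{I}S_n(k)$, $\mathrm{I}S^*_n(k)$ denote these constant values. A permutation $\pi$ of $\{0,\ldots,2^n-1\}$ is admissible if for all $k$, all $x\in D_{n,k}$, all $y\in D_{n,\pi(k)}$: $S^*_n(x)=S_n(y)$. Let $\mathrm{SBC}(n,0)=0$ and $\mathrm{SBC}(n,i)=\sum_{j=0}^{i-1}\binom{n}{j}$ for $1\le i\le n+1$. For $0\le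 k<2^n$, $\mathrm{IStep}(n,k)$ is the unique $i\in\{0,\ldots,n\}$ with $\mathrm{SBC}(n,i)\le k<\mathrm{SBC}(n,i+1)$. $\mathrm{Weight}(k)$ is the number of 1's in the binary representation of $k$. $\mathrm{I}A_{n,i}=\{k<2^n:\mathrm{IStep}(n,k)=i\}$ and $\mathrm{I}B_{n,i}=\{k<2^n:\mathrm{Weight}(k)=i\}$. *)

(* Defs.v *)
From HB Require Import structures.
From mathcomp Require Import all_boot all_order all_algebra all_fingroup.
From mathcomp Require Import all_classical all_reals all_analysis.
Set Implicit Arguments. Unset Strict Implicit. Unset Printing Implicit Defensive.
Import Order.TTheory GRing.Theory Num.Theory.
Local Open Scope classical_set_scope.
Local Open Scope ring_scope.

Section Defs.
Variable R : realType.

(* i-th binary digit of x (i >= 1), for the expansion with infinitely many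
   zeros: eps_i(x) = floor(2^i x) mod 2. *)
Definition eps (i : nat) (x : R) : bool := odd `|Num.floor (x * 2 ^+ i)|%N.

Definition S (n : nat) (x : R) : R :=
  \sum_(1 <= i < n.+1) (-1) ^+ (1 + eps i x).

Definition F_S (n : nat) (t : R) : R :=
  fine (@lebesgue_measure R ([set` `]0, 1[] `&` [set x | S n x <= t])).

Definition Sstar (n : nat) (x : R) : R := inf [set t : R | x <= F_S n t].

Definition D (n k : nat) : set R :=
  if k == 0%N then [set` `]0, 2 ^- n[]
  else [set` `[k%:R / 2 ^+ n, k.+1%:R / 2 ^+ n[].

Definition Dint (n k : nat) : set R := [set` `]k%:R / 2 ^+ n, k.+1%:R / 2 ^+ n[].

(* the constant values of S_n, S*_n on D_{n,k}, read off at the midpoint *)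
Definition IS (n k : nat) : R := S n ((k.*2.+1)%:R / 2 ^+ n.+1).
Definition ISstar (n k : nat) : R := Sstar n ((k.*2.+1)%:R / 2 ^+ n.+1).

Definition admissible (n : nat) (pi : {perm 'I_(2 ^ n)}) : Prop :=
  forall k : 'I_(2 ^ n), forall x y : R,
    x \in Dint n k -> y \in D n (pi k) -> Sstar n x = S n y.
End Defs.
Local Close Scope ring_scope.
Local Open Scope nat_scope.

Definition SBC (n i : nat) : nat := \sum_(j < i) 'C(n, j).

Definition IStep (n k : nat) : nat :=
  odflt 0%N (omap (@nat_of_ord n.+1)
    [pick i : 'I_n.+1 | (SBC n i <= k) && (k < SBC n i.+1)]).

Definition Weight (k : nat) : nat := \sum_(j < k.+1) odd (k %/ 2 ^ j).

Definition IA (n i : nat) : {set 'I_(2 ^ n)} := [set k : 'I_(2 ^ n) | IStep n k == i].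
Definition IB (n i : nat) : {set 'I_(2 ^ n)} := [set k : 'I_(2 ^ n) | Weight k == i].

(* Main.v *)
Require Import Defs.
From HB Require Import structures.
From mathcomp Require Import all_boot all_order all_algebra all_fingroup.
From mathcomp Require Import all_classical all_reals all_analysis.
From mathcomp Require Import ring lra zify.
Import Order.TTheory GRing.Theory Num.Theory.
Set Implicit Arguments. Unset Strict Implicit. Unset Printing Implicit Defensive.

Section Comb.
Local Open Scope nat_scope.
Definition W (n k : nat) : nat := \sum_(j < n) odd (k %/ 2 ^ j).

Lemma WS n k : W n.+1 k = odd k + W n k./2.
Proof.
rewrite /W big_ord_recl /= expn0 divn1; congr (_ + _); apply: eq_bigr => j _.
by rewrite /bump /= add1n expnS divnMA divn2.
Qed.

Lemma W_le n k : W n k <= n.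
Proof.
rewrite /W -[X in _ <= X]card_ord -sum1_card; apply: leq_sum => j _; exact: leq_b1.
Qed.

Lemma sum_trunc (F : nat -> nat) M N : M <= N -> (forall j, M <= j -> j < N -> F j = 0) ->
  \sum_(j < N) F j = \sum_(j < M) F j.
Proof.
move=> hMN hF; rewrite -!(big_mkord xpredT) (@big_cat_nat _ _ _ M 0 N _ _ (leq0n M) hMN) /=.
rewrite [X in _ + X]big_nat_cond [X in _ + X]big1 ?addn0 // => j /andP[/andP[h1 h2] _]; exact: hF.
Qed.


Lemma Weight_W n k : k < 2 ^ n -> Weight k = W n k.
Proof.
move=> hk; rewrite /Weight /W.
have h0 : forall j, (n <= j) || (k < j) -> (odd (k %/ 2 ^ j) : nat) = 0.
  move=> j /orP[hj|hj]; rewrite divn_small //.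
    by apply: (leq_trans hk); rewrite leq_exp2l.
  by apply: (leq_trans (ltn_expl k (ltnSn 1))); rewrite leq_exp2l // ltnW.
rewrite -(@sum_trunc (fun j => odd (k %/ 2 ^ j)) k.+1 (maxn n k.+1)) ?leq_maxr //; last first.
  by move=> j hj _; apply: h0; rewrite hj orbT.
rewrite -(@sum_trunc (fun j => odd (k %/ 2 ^ j)) n (maxn n k.+1)) ?leq_maxl //.
by move=> j hj _; apply: h0; rewrite hj.
Qed.

Lemma sum_double (F : nat -> nat) m :
  \sum_(k < m.*2) F k = \sum_(q < m) (F q.*2 + F q.*2.+1).
Proof.
elim: m => [|m IH]; first by rewrite !big_ord0.
by rewrite doubleS !big_ord_recr /= IH addnA.
Qed.

Lemma cntW n j : \sum_(k < 2 ^ n) (W n k == j) = 'C(n, j).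
Proof.
elim: n j => [|n IH] j.
  by rewrite expn0 big_ord_recl big_ord0 /W big_ord0 bin0n addn0 eq_sym.
rewrite expnS mul2n.
rewrite (sum_double (fun k => W n.+1 k == j)).
have hh : forall q, W n.+1 q.*2 = W n q /\ W n.+1 q.*2.+1 = (W n q).+1.
  move=> q; rewrite !WS odd_double doubleK; split => //.
  by rewrite (half_bit_double q true) /= odd_double.
case: j => [|j].
  transitivity 'C(n, 0); last by rewrite !bin0.
  rewrite -IH; apply: eq_bigr => q _ /=; case: (hh q) => -> ->.
  by rewrite addn0.
rewrite binS -!IH -big_split /=; apply: eq_bigr => q _ /=; case: (hh q) => -> ->.
by rewrite eqSS.
Qed.

Lemma card_setP N (P : pred 'I_N) : #|[set k | P k]| = \sum_(k < N) P k.
Proof. by rewrite -sum1dep_card big_mkcond /=; apply: eq_bigr => k _; case: (P k). Qed.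

Lemma cnt_itv N a b : a <= b -> b <= N -> \sum_(k < N) ((a <= k) && (k < b)) = b - a.
Proof.
move=> hab hbN; rewrite -(big_mkord xpredT (fun k => nat_of_bool ((a <= k) && (k < b)))).
rewrite (@big_cat_nat _ _ _ a 0 N) //= ?(leq_trans hab) //.
rewrite (@big_cat_nat _ _ _ b a N) //=.
rewrite big_nat_cond big1; last by move=> k /andP[/andP[_ h] _]; rewrite leqNgt h.
rewrite [X in _ + (_ + X)]big_nat_cond [X in _ + (_ + X)]big1; last first.
  by move=> k /andP[/andP[h _] _]; rewrite ltnNge h andbF.
rewrite add0n addn0 big_nat_cond (eq_bigr (fun _ => 1)); last first.
  by move=> k /andP[/andP[h1 h2] _]; rewrite h1 h2.
by rewrite -big_nat_cond sum_nat_const_nat muln1.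
Qed.

Lemma SBC_S n i : SBC n i.+1 = SBC n i + 'C(n, i).
Proof. by rewrite /SBC big_ord_recr. Qed.

Lemma SBC_mono n i j : i <= j -> SBC n i <= SBC n j.
Proof.
elim: j => [|j IH]; first by rewrite leqn0 => /eqP ->.
rewrite leq_eqVlt => /orP[/eqP -> //|]; rewrite ltnS => /IH h.
by rewrite SBC_S (leq_trans h) // leq_addr.
Qed.

Lemma SBC0 n : SBC n 0 = 0.
Proof. by rewrite /SBC big_ord0. Qed.

Lemma SBC_full n : SBC n n.+1 = 2 ^ n.
Proof.
rewrite /SBC; under eq_bigr => i _ do rewrite -cntW.
rewrite exchange_big /=.
rewrite (eq_bigr (fun _ => 1)); first by rewrite sum1_card card_ord.
move=> k _; rewrite (bigD1 (Ordinal (leq_ltn_trans (W_le n k) (ltnSn n)))) //= eqxx.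
rewrite big1 // => i hi; apply/eqP; rewrite eqb0; apply: contra hi => /eqP h.
by apply/eqP/val_inj; rewrite /= h.
Qed.

Lemma IStep_spec n k : k < 2 ^ n ->
  IStep n k <= n /\ SBC n (IStep n k) <= k < SBC n (IStep n k).+1.
Proof.
move=> hk.
have ex : exists i, k < SBC n i.+1 by exists n; rewrite SBC_full.
case: (ex_minnP ex) => m hm hmin.
have hmn : m <= n by apply: hmin; rewrite SBC_full.
have hlo : SBC n m <= k.
  case: m hm hmin hmn => [|m] hm hmin hmn; first by rewrite SBC0.
  by rewrite leqNgt; apply/negP => /hmin; rewrite ltnn.
rewrite /IStep; case: pickP => [i /andP[h1 h2]|].
  by rewrite /=; split => //; [rewrite -ltnS ltn_ord | rewrite h1 h2].
by move=> /(_ (Ordinal (leq_ltn_trans hmn (ltnSn n)))) /=; rewrite hlo hm.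
Qed.

Lemma IStep_eq n k i : k < 2 ^ n -> SBC n i <= k < SBC n i.+1 -> IStep n k = i.
Proof.
move=> hk /andP[h1 h2]; case: (IStep_spec hk) => _ /andP[h3 h4].
case: (ltngtP (IStep n k) i) => // h.
  by move: (leq_trans (SBC_mono n h) h1); rewrite leqNgt h4.
by move: (leq_trans (SBC_mono n h) h3); rewrite leqNgt h2.
Qed.

Lemma card_IA n i : i <= n -> #|IA n i| = 'C(n, i).
Proof.
move=> hi; rewrite /IA card_setP.
rewrite (eq_bigr (fun k : 'I_(2 ^ n) => nat_of_bool ((SBC n i <= k) && (k < SBC n i.+1)))).
  rewrite cnt_itv ?SBC_S ?addKn // ?leq_addr //.
  by rewrite -SBC_S -SBC_full SBC_mono.
move=> k _; have hk := ltn_ord k; congr nat_of_bool.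
case hh: ((SBC n i <= k) && (k < SBC n i.+1)); first by rewrite (IStep_eq hk hh) eqxx.
apply/negbTE/eqP => hE; case: (IStep_spec hk) => _ h2.
by move: hh; rewrite -hE h2.
Qed.

Lemma card_IB n i : #|IB n i| = 'C(n, i).
Proof.
rewrite /IB card_setP -cntW; apply: eq_bigr => k _.
by rewrite (Weight_W (ltn_ord k)).
Qed.

Lemma sum_eq_lt (w j : nat) : \sum_(l < j) (w == l) = (w < j).
Proof.
elim: j => [|j IH]; first by rewrite big_ord0.
rewrite big_ord_recr /= IH ltnS.
by case: (ltngtP w j).
Qed.

Lemma cnt_lt n j : #|[set k : 'I_(2 ^ n) | W n k < j]| = SBC n j.
Proof.
rewrite card_setP /SBC; under eq_bigr => k _ do rewrite -sum_eq_lt.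
rewrite exchange_big /=; apply: eq_bigr => l _; exact: cntW.
Qed.
End Comb.

Section PermCount.
Variable T : finType.

Lemma cardD1_cond (X : {set T}) (h : T -> nat) z i : z \in X ->
  #|[set x in X | h x == i]| = (h z == i) + #|[set x in X :\ z | h x == i]|.
Proof.
move=> hz; rewrite (cardsD1 z) !inE hz /=; congr (_ + _); apply: eq_card => x.
by rewrite !inE andbA.
Qed.

Lemma perm_onI (S : {set T}) (u : {perm T}) : (forall x, x \notin S -> u x = x) -> perm_on S u.
Proof.
move=> h; apply/fintype.subsetP => x; rewrite inE; apply: contraR => hx; apply/eqP; exact: h.
Qed.

Lemma count_perm (f g : T -> nat) (m : nat) : (forall x, g x < m) ->
  forall X : {set T},
  (forall x, x \notin X -> f x = g x) ->
  (forall i, #|[set x in X | f x == i]| = #|[set x in X | g x == i]|) ->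
  #|[set pi : {perm T} | perm_on X pi && [forall x, f (pi x) == g x]]| =
  \prod_(i < m) (#|[set x in X | g x == i]|)`!.
Proof.
move=> hg X; have [N] := ubnP #|X|; elim: N X f => // N IH X f hXN hout hcnt.
case: (set_0Vmem X) => [X0|[x0 hx0]].
  rewrite X0 in hout *.
  rewrite big1; last by move=> i _; rewrite (_ : [set x in finset.set0 | g x == i] = finset.set0) ?cards0 //; apply/setP => x; rewrite !inE.
  rewrite (_ : [set pi | _] = [set 1%g]) ?cards1 //; apply/setP => pi; rewrite !inE.
  apply/idP/idP.
    move=> /andP[hp _]; apply/eqP; apply: (perm_on_id hp); by rewrite cards0.
  move=> /eqP ->; rewrite perm_on1 /=; apply/forallP => x; by rewrite perm1 hout ?inE.
set Y := X :\ x0.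
have hY : #|Y| < N by move: hXN; rewrite (cardsD1 x0 X) hx0 add1n ltnS.
set PY := \prod_(i < m) (#|[set x in Y | g x == i]|)`!.
have fib : forall y, y \in X -> f y = g x0 ->
    #|[set pi : {perm T} | (perm_on X pi && [forall x, f (pi x) == g x]) && (pi x0 == y)]| = PY.
  move=> y hy hfy; set t := tperm x0 y; set f' := fun x => f (t x).
  have ht : forall x, x \notin X -> t x = x.
    move=> x hx; rewrite /t tpermD //; apply/eqP => e; move: hx; by rewrite -e ?hx0 ?hy.
  have hout' : forall x, x \notin Y -> f' x = g x.
    move=> x; rewrite /Y !inE negb_and negbK => /orP[/eqP ->|hx].
      by rewrite /f' /t tpermL hfy.
    by rewrite /f' ht // hout.
  have htX : forall x, (t x \in X) = (x \in X).
    by move=> x; rewrite /t; case: tpermP => [->|->|_ _]; rewrite ?hx0 ?hy.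
  have hcnt' : forall i, #|[set x in Y | f' x == i]| = #|[set x in Y | g x == i]|.
    move=> i; apply/eqP; rewrite -(eqn_add2l (g x0 == i)) -cardD1_cond // -hcnt.
    rewrite -hfy -{1}(tpermL x0 y) -/t -(cardD1_cond (fun x => f (t x))) //.
    rewrite -(card_preimset [set x in X | f x == i] (@perm_inj _ t)); apply/eqP; apply: eq_card => x.
    by rewrite !inE htX.
  rewrite /PY -(IH Y f' hY hout' hcnt').
  rewrite -(card_imset _ (mulIg t)); apply: eq_card => pi; rewrite inE.
  apply/imsetP/idP.
    move=> [q]; rewrite inE => /andP[/andP[hp /forallP hf] /eqP hpx0] ->; apply/andP; split.
      apply: perm_onI => x; rewrite /Y !inE negb_and negbK permM => /orP[/eqP ->|hx].
        by rewrite hpx0 /t tpermR.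
      by rewrite (out_perm hp hx) ht.
    by apply/forallP => x; rewrite /f' permM tpermK; apply: hf.
  move=> /andP[hr /forallP hf]; exists (pi * t)%g; last by rewrite -mulgA tperm2 mulg1.
  rewrite inE; apply/andP; split; last first.
    rewrite permM (out_perm hr) ?/t ?tpermL //; by rewrite /Y !inE eqxx.
  apply/andP; split.
    apply: perm_onI => x hx; rewrite permM (out_perm hr) ?ht //.
    by rewrite /Y !inE negb_and hx orbT.
  by apply/forallP => x; rewrite permM; apply: hf.
rewrite -sum1dep_card (partition_big (fun pi : {perm T} => pi x0) (fun y => (y \in X) && (f y == g x0))); last first.
  move=> pi /andP[hp /forallP hf]; rewrite (perm_closed _ hp) hx0 /=; exact: hf.
rewrite (eq_bigr (fun _ => PY)); last first.
  move=> y /andP[hy /eqP hfy]; by rewrite sum1dep_card fib.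
have -> : \sum_(y | (y \in X) && (f y == g x0)) PY = #|[set y in X | f y == g x0]| * PY.
  by rewrite -sum1dep_card big_distrl /=; apply: eq_bigr => y _; rewrite mul1n.
rewrite hcnt /PY.
have hi0 : g x0 < m by apply: hg.
rewrite (bigD1 (Ordinal hi0)) //= [in RHS](bigD1 (Ordinal hi0)) //= mulnA.
rewrite (@cardD1_cond X g x0 (g x0) hx0) eqxx add1n factS; congr (_ * _).
apply: eq_bigr => i hi; rewrite (@cardD1_cond X g x0 i hx0).
have -> : (g x0 == i) = false.
  by apply/negbTE; apply: contra hi => /eqP e; apply/eqP/val_inj; rewrite /= e.
done.
Qed.
End PermCount.

Section Real.
Variable R : realType.
Local Open Scope classical_set_scope.
Local Open Scope ring_scope.

Lemma floor_dy (n k i : nat) (y : R) : (i <= n)%N ->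
  k%:R / 2 ^+ n <= y -> y < k.+1%:R / 2 ^+ n ->
  Num.floor (y * 2 ^+ i) = (k %/ 2 ^ (n - i))%:Z.
Proof.
move=> hin h1 h2.
set d := (2 ^ (n - i))%N; set q := (k %/ d)%N.
have hd : (0 < d)%N by rewrite expn_gt0.
have hdR : (0:R) < d%:R by rewrite ltr0n.
have h2i : (0:R) < 2 ^+ i by apply: exprn_gt0.
have e : (2:R) ^+ n = 2 ^+ i * d%:R by rewrite /d natrX -exprD subnKC.
have h2n : (0:R) < 2 ^+ n by apply: exprn_gt0.
move: h1 h2; rewrite ler_pdivrMr // ltr_pdivlMr // e mulrA => h1 h2.
have hq1 : ((q * d)%N%:R : R) <= k%:R by rewrite ler_nat /q leq_divM.
have hq2 : (k.+1%:R : R) <= (q.+1 * d)%N%:R by rewrite ler_nat /q ltn_ceil.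
rewrite natrM in hq1 hq2.
apply: floor_def; apply/andP; split.
  rewrite -(ler_pM2r hdR) (_ : q%:~R = q%:R :> R) //; exact: le_trans hq1 h1.
rewrite -(ltr_pM2r hdR) intrD (_ : q%:~R + 1%:~R = q.+1%:R :> R); first by apply: lt_le_trans h2 _; rewrite -natrM.
by rewrite -natr1.
Qed.

Lemma two_pos n : (0:R) < 2 ^+ n.
Proof. exact: exprn_gt0. Qed.

Lemma inD n k (y : R) : y \in D n k -> k%:R / 2 ^+ n <= y < k.+1%:R / 2 ^+ n.
Proof.
rewrite /D; case: eqP => [->|hk]; rewrite inE /= in_itv //= => /andP[h1 h2].
by rewrite mul0r (ltW h1) /= div1r.
Qed.

Lemma inDint n k (x : R) : x \in Dint n k -> k%:R / 2 ^+ n < x < k.+1%:R / 2 ^+ n.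
Proof. by rewrite /Dint inE /= in_itv. Qed.

Lemma floor_D n k (y : R) : y \in D n k -> Num.floor (y * 2 ^+ n) = k%:Z.
Proof.
move=> /inD /andP[h1 h2]; rewrite (floor_dy (leqnn n) h1 h2).
by rewrite subnn expn0 divn1.
Qed.

Lemma eps_D n k i (y : R) : (i <= n)%N -> y \in D n k -> eps i y = odd (k %/ 2 ^ (n - i)).
Proof.
move=> hi /inD /andP[h1 h2]; by rewrite /eps (floor_dy hi h1 h2) absz_nat.
Qed.

Lemma sum_rev n k : (\sum_(1 <= i < n.+1) odd (k %/ 2 ^ (n - i)))%N = W n k.
Proof.
rewrite big_add1 succnK big_nat_rev /W -(big_mkord xpredT (fun j => nat_of_bool (odd (k %/ 2 ^ j)))).
apply: eq_big_nat => i /andP[_ hi]; congr (nat_of_bool (odd (k %/ 2 ^ _))); lia.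
Qed.

Lemma S_D n k (y : R) : y \in D n k -> S n y = 2 * (W n k)%:R - n%:R.
Proof.
move=> hy; rewrite /S.
rewrite (eq_big_nat _ _ (F2 := fun i => 2 * (odd (k %/ 2 ^ (n - i)))%:R - 1)); last first.
  move=> i /andP[h1 h2]; rewrite (eps_D _ hy) //.
  by case: (odd _); rewrite /= ?expr1 ?expr2 ?mulrNN; lra.
rewrite big_split /= -big_distrr /= -natr_sum sum_rev sumr_const_nat subSS subn0.
by rewrite mulNrn.
Qed.

Lemma bigsetU_ordP (T : Type) N (P : pred 'I_N) (F : 'I_N -> set T) x :
  (\big[setU/set0]_(k < N | P k) F k) x <-> exists2 k, P k & F k x.
Proof.
rewrite -bigcup_seq_cond; split => [[k /andP[_ hk] hx]|[k hk hx]]; first by exists k.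
by exists k => //; rewrite /= mem_index_enum hk.
Qed.

Lemma D_meas n k : measurable (@D R n k).
Proof. by rewrite /D; case: ifP => _; exact: measurable_itv. Qed.

Lemma D_mu n k : (lebesgue_measure (@D R n k) = ((2 ^+ n)^-1)%:E)%E.
Proof.
have h := two_pos n.
rewrite /D; case: eqP => [_|hk]; rewrite lebesgue_measure_itv /=.
  by rewrite lte_fin invr_gt0 h /= -EFinB subr0.
rewrite lte_fin ltr_pM2r ?invr_gt0 // ltr_nat ltnSn /= -EFinB; congr (_%:E).
by rewrite -mulrBl -natr1 addrAC subrr add0r mul1r.
Qed.

Lemma D_sub01 n k : (k < 2 ^ n)%N -> @D R n k `<=` `]0, 1[.
Proof.
move=> hk y hy; have /inD /andP[h1 h2] : y \in D n k by rewrite inE.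
have h := two_pos n.
rewrite /= in_itv /=; apply/andP; split.
  move: hy; rewrite /D; case: eqP => [_|hk0]; first by rewrite /= in_itv /= => /andP[].
  move=> _; apply: lt_le_trans h1; rewrite divr_gt0 // ltr0n lt0n; exact/eqP.
apply: (lt_le_trans h2); rewrite ler_pdivrMr // mul1r -natrX ler_nat; exact: hk.
Qed.

Lemma in01_D n (x : R) : x \in `]0, 1[ ->
  exists2 k : 'I_(2 ^ n), Num.floor (x * 2 ^+ n) = (k : nat)%:Z & x \in D n k.
Proof.
rewrite in_itv /= => /andP[h0 h1].
have h := two_pos n.
have hf0 : 0 <= Num.floor (x * 2 ^+ n) by rewrite floor_ge0 mulr_ge0 // ltW.
set k := `|Num.floor (x * 2 ^+ n)|%N.
have ek : Num.floor (x * 2 ^+ n) = k%:Z by rewrite /k gez0_abs.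
have hk : (k < 2 ^ n)%N.
  have hlt : (Num.floor (x * 2 ^+ n))%:~R < (2:R) ^+ n.
    by apply: le_lt_trans (floor_le _) _; rewrite -[X in _ < X]mul1r ltr_pM2r.
  rewrite ek in hlt; rewrite -(ltr_nat R) natrX; exact: hlt.
exists (Ordinal hk) => //=.
have := floor_itv (x * 2 ^+ n); rewrite ek => /andP[l1 l2].
have e1 : (((k%:Z + 1)%:~R) : R) = k.+1%:R by rewrite intrD -natr1.
rewrite e1 in l2.
rewrite /D inE; case: eqP => [k0|k0] /=; rewrite in_itv /=; apply/andP; split => //.
- by rewrite -div1r ltr_pdivlMr //; move: l2; rewrite k0.
- by rewrite ler_pdivrMr.
- by rewrite ltr_pdivlMr.
Qed.

Lemma F_S_eq n (t : R) : F_S n t =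
  (#|[set k : 'I_(2 ^ n) | 2 * (W n k)%:R - n%:R <= t]%SET|)%:R / 2 ^+ n.
Proof.
set P := fun k : 'I_(2 ^ n) => 2 * (W n k)%:R - n%:R <= t.
have hset : `]0, 1[ `&` [set x | S n x <= t] = \big[setU/set0]_(k < 2 ^ n | P k) D n k.
  apply/seteqP; split => x.
    move=> [hx hS]; apply/bigsetU_ordP.
    have [k hk hxk] := @in01_D n x hx.
    exists k; last by move: hxk; rewrite inE.
    by rewrite /P -(S_D hxk).
  move=> /bigsetU_ordP [k hk hxk]; split; first exact: (D_sub01 (ltn_ord k)).
  by rewrite /= (S_D (y := x) (k := k)) ?inE.
rewrite /F_S hset measure_bigsetU_ord_cond //; last first.
- move=> i j _ _ [x [hi hj]].
  have := floor_D (y := x) (k := i) (n := n); rewrite inE => /(_ hi).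
  have := floor_D (y := x) (k := j) (n := n); rewrite inE => /(_ hj) -> [] e.
  by apply: val_inj.
- by move=> i _; exact: D_meas.
rewrite (eq_bigr (fun _ => ((2 ^+ n)^-1)%:E)); last by move=> i _; apply: D_mu.
rewrite sumEFin /= -sum1dep_card natr_sum big_distrl /=.
by apply: eq_bigr => i _; rewrite mul1r.
Qed.

Lemma Sstar_Dint n k (x : R) : (k < 2 ^ n)%N -> x \in Dint n k ->
  Sstar n x = 2 * (IStep n k)%:R - n%:R.
Proof.
move=> hk hx; have /andP[x1 x2] := inDint hx.
have h := two_pos n.
case: (IStep_spec hk) => hin /andP[s1 s2].
set i := IStep n k in hin s1 s2 *.
set c : R := 2 * i%:R - n%:R.
have cnt_c : forall t, c <= t ->
    (SBC n i.+1 <= #|[set k' : 'I_(2 ^ n) | (2 * (W n k')%:R - n%:R <= t)%R]%SET|)%N.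
  move=> t hct; rewrite -cnt_lt; apply: subset_leq_card; apply/fintype.subsetP => k'.
  rewrite !inE ltnS => hw; apply: (le_trans _ hct); by rewrite /c lerD2r ler_pM2l // ler_nat.
have cnt_t : forall t, t < c ->
    (#|[set k' : 'I_(2 ^ n) | (2 * (W n k')%:R - n%:R <= t)%R]%SET| <= SBC n i)%N.
  move=> t htc; rewrite -cnt_lt; apply: subset_leq_card; apply/fintype.subsetP => k'.
  rewrite !inE => hw; rewrite ltnNge; apply/negP => hiw.
  have h' : c <= 2 * (W n k')%:R - n%:R by rewrite /c lerD2r ler_pM2l // ler_nat.
  by move: (lt_le_trans htc (le_trans h' hw)); rewrite ltxx.
rewrite /Sstar; set E := [set t | x <= F_S n t].
have hcE : E c.
  rewrite /E /= F_S_eq; apply: ltW; apply: lt_le_trans x2 _.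
  by rewrite ler_pM2r ?invr_gt0 // ler_nat (leq_trans s2 (cnt_c c (lexx c))).
have hlb : forall t, E t -> c <= t.
  move=> t; rewrite /E /= F_S_eq => ht; rewrite leNgt; apply/negP => htc.
  have h' : (#|[set k' : 'I_(2 ^ n) | 2 * (W n k')%:R - n%:R <= t]%SET|)%:R / 2 ^+ n
      <= k%:R / 2 ^+ n :> R.
    by rewrite ler_pM2r ?invr_gt0 // ler_nat (leq_trans (cnt_t t htc) s1).
  by move: (le_lt_trans (le_trans ht h') x1); rewrite ltxx.
apply/eqP; rewrite eq_le; apply/andP; split.
  by apply: ge_inf => //; exists c.
by apply: lb_le_inf; [exists c | exact: hlb].
Qed.

Lemma mid_eq n k : ((k.*2.+1)%:R / 2 ^+ n.+1 : R) = (k%:R + 2^-1) / 2 ^+ n.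
Proof.
have h := two_pos n.
rewrite exprS -natr1 -mul2n natrM; field.
by rewrite gt_eqF.
Qed.

Lemma mid_Dint n k : ((k.*2.+1)%:R / 2 ^+ n.+1 : R) \in Dint n k.
Proof.
have h := two_pos n.
have h2 : (0:R) < 2^-1 by rewrite invr_gt0 ltr0n.
have h3 : (2:R)^-1 < 1 by rewrite invf_lt1 ?ltr1n.
rewrite /Dint inE /= in_itv /= mid_eq; apply/andP; split;
  rewrite ltr_pM2r ?invr_gt0 // -?(natr1 k); lra.
Qed.

Lemma mid_D n k : ((k.*2.+1)%:R / 2 ^+ n.+1 : R) \in D n k.
Proof.
have h := two_pos n.
have h2 : (0:R) < 2^-1 by rewrite invr_gt0 ltr0n.
have h3 : (2:R)^-1 < 1 by rewrite invf_lt1 ?ltr1n.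
rewrite /D inE mid_eq; case: eqP => [->|_] /=; rewrite in_itv /=; apply/andP; split.
- by rewrite divr_gt0 //; lra.
- by rewrite -[X in _ < X]mul1r ltr_pM2r ?invr_gt0 //; lra.
- by rewrite ler_pM2r ?invr_gt0 //; lra.
- by rewrite ltr_pM2r ?invr_gt0 // -(natr1 k); lra.
Qed.
End Real.

Theorem lemma1 (R : realType) (n : nat) (hn : (1 <= n)%N) :
  (forall pi : {perm 'I_(2 ^ n)},
     (admissible R pi <-> (forall k : 'I_(2 ^ n), Weight (pi k) = IStep n k)) /\
     (admissible R pi <-> (forall i : nat, (i < n)%N -> pi @: IA n i = IB n i)) /\
     (admissible R pi <-> (forall k : 'I_(2 ^ n), ISstar R n k = IS R n (pi k))))
  /\
  #|[set pi : {perm 'I_(2 ^ n)} | `[< admissible R pi >]]| =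
    (\prod_(i < n.+1) ('C(n, i))`!)%N.
Proof.
have hW : forall k : 'I_(2 ^ n), Weight k = W n k := fun k => Weight_W (ltn_ord k).
have hWle : forall k : 'I_(2 ^ n), (Weight k <= n)%N by move=> k; rewrite hW W_le.
have keyA : forall pi : {perm 'I_(2 ^ n)}, admissible R pi <->
    (forall k : 'I_(2 ^ n), Weight (pi k) = IStep n k).
  move=> pi; split.
    move=> hadm k; have := hadm k _ _ (mid_Dint R n k) (mid_D R n (pi k)).
    rewrite (Sstar_Dint (ltn_ord k) (mid_Dint R n k)) (S_D (mid_D R n (pi k))) hW => e.
    apply/eqP; rewrite -(eqr_nat R); apply/eqP; lra.
  move=> hA k x y hx hy; by rewrite (Sstar_Dint (ltn_ord k) hx) (S_D hy) -hW hA.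
split.
  move=> pi; split; first exact: keyA.
  split.
    rewrite keyA; split.
      move=> hA i hi; apply/eqP; rewrite eqEcard card_imset ?card_IA ?card_IB ?leqnn ?andbT ?(ltnW hi) //; last exact: perm_inj.
      apply/fintype.subsetP => y /imsetP [k]; rewrite !inE => /eqP hk ->.
      by rewrite hA hk.
    move=> hB k.
    have [hin _] := IStep_spec (ltn_ord k).
    case: (ltnP (IStep n k) n) => hi.
      have : pi k \in pi @: IA n (IStep n k) by apply: imset_f; rewrite inE.
      by rewrite hB // inE => /eqP.
    have e : IStep n k = n by apply/eqP; rewrite eqn_leq hin hi.
    rewrite e; apply/eqP; rewrite eqn_leq (hWle (pi k)) /= leqNgt; apply/negP => hlt.
    have : pi k \in IB n (Weight (pi k)) by rewrite inE.
    rewrite -hB // => /imsetP [k' hk' /perm_inj ek].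
    by move: hk'; rewrite inE -ek e => /eqP h; rewrite -h ltnn in hlt.
  rewrite keyA; split => hA k.
    by rewrite /ISstar /IS (Sstar_Dint (ltn_ord k) (mid_Dint R n k)) (S_D (mid_D R n (pi k))) -hW hA.
  have := hA k; rewrite /ISstar /IS (Sstar_Dint (ltn_ord k) (mid_Dint R n k)) (S_D (mid_D R n (pi k))) -hW => e.
  apply/eqP; rewrite -(eqr_nat R); apply/eqP; lra.
transitivity #|[set pi : {perm 'I_(2 ^ n)} | perm_on [set: 'I_(2 ^ n)] pi &&
    [forall x, Weight (pi x) == IStep n x]]|.
  apply: eq_card => pi; rewrite !inE.
  have hpT : perm_on [set: 'I_(2 ^ n)] pi by apply/fintype.subsetP => x _; rewrite inE.
  rewrite hpT /=.
  case: (asboolP (admissible R pi)) => h.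
    symmetry; apply/forallP => x; apply/eqP; exact: (proj1 (keyA pi) h).
  symmetry; apply/negbTE/negP => /forallP hf; apply: h; apply/keyA => k; exact/eqP.
rewrite (@count_perm _ (fun x : 'I_(2 ^ n) => Weight x) (fun x => IStep n x) n.+1).
- apply: eq_bigr => i _; congr (_`!).
  transitivity #|IA n i|; first by apply: eq_card => x; rewrite !inE.
  by rewrite card_IA // -ltnS.
- by move=> x; rewrite ltnS; case: (IStep_spec (ltn_ord x)).
- by move=> x; rewrite inE.
move=> i.
transitivity #|IB n i|; first by apply: eq_card => x; rewrite !inE.
transitivity #|IA n i|; last by apply: eq_card => x; rewrite !inE.
rewrite card_IB; case: (leqP i n) => hi; first by rewrite card_IA.
rewrite bin_small // eq_card0 // => x; rewrite !inE; apply/negbTE.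
case: (IStep_spec (ltn_ord x)) => h _; apply/eqP => e; by rewrite e leqNgt hi in h.
Qed.
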